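(* Let $p$ be a (positive) stochastic choice function on a finite set $X$ such that there exist three alternatives $a,b,c\in X$ with $a\not\sim_p b$, $b\not\sim_p c$ and $a\not\sim_p c$. Then $p$ satisfies Independence of Symmetric Alternatives if and only if $p$ is a nondegenerate Nested Stochastic Choice (NSC).
   Context: $X$ is a finite set of alternatives and $\mathscr{A}$ is the collection of all nonempty subsets of $X$ (menus). A stochastic choice function is a map $p:X\times\mathscr{A}\to[0,1]$ with $\sum_{a\in A}p(a,A)=1$ for every $A\in\mathscr{A}$ and $p(x,A)=0$ for $x\notin A$; throughout, $p$ is positive: $p(a,A)>0$ whenever $a\in A$. For $B\subseteq X$ write $p(B,A)=\sum_{b\in B}p(b,A)$, and write $A\cup x$ for $A\cup\{x\}$. $p$ satisfies IIA at $a,b$ if $\frac{p(a,A)}{p(b,A)}=\frac{p(a,\{a,b\})}{p(b,\{a,b\})}$ for every $A\in\mathscr{A}$ with $a,b\in A$. Alternatives $a,b$ are revealed categorically similar, written $a\sim_p b$, if $p$ satisfies IIA at $a,b$. Independence of Symmetric Alternatives (ISA): for any $A\in\mathscr{A}$, $a,b\in A$ and $x\notin A$, if either ($a\sim_p x$ and $b\sim_p x$) or ($a\not\sim_p x$ and $b\not\sim_p x$), then $\frac{p(a,A)}{p(b,A)}=\frac{p(a,A\cup x)}{p(b,A\cup x)}$. $p$ is an NSC if there exist a partition $X_1,\dots,X_K$ of $X$, a function $u:X\to\mathbb{R}_{++}$ and a function $v:\bigcup_{i=1}^K 2^{X_i}\to\mathbb{R}_+$ with $v(\emptyset)=0$ such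 that for every $A\in\mathscr{A}$ and $a\in A\cap X_i$, $p(a,A)=\frac{v(A\cap X_i)}{\sum_{j=1}^K v(A\cap X_j)}\cdot\frac{u(a)}{\sum_{b\in A\cap X_i}u(b)}$. Such an NSC (with representation $(v,u,\{X_i\}_{i=1}^K)$) is nondegenerate if there is at most one index $i\le K$ for which there exists $a\in X_i$ with $\frac{\sum_{x\in A_i}u(x)}{v(A_i)}=\frac{u(a)}{v(\{a\})}$ for every $A_i\subseteq X_i$ with $a\in A_i$. *)

(* Defs.v *)
(* X is a finType T; menus are nonempty {set T};
   probabilities live in an arbitrary R : realType (the reals). *)
From mathcomp Require Import all_boot all_order all_algebra.
From mathcomp Require Import reals.
Set Implicit Arguments. Unset Strict Implicit. Unset Printing Implicit Defensive.
Import Order.TTheory GRing.Theory Num.Theory.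
Local Open Scope ring_scope.

Section Defs.
Variables (R : realType) (T : finType).

Definition is_scf (p : T -> {set T} -> R) : Prop :=
  (forall A : {set T}, A != set0 -> \sum_(a in A) p a A = 1) /\
  (forall (A : {set T}) (x : T), A != set0 -> x \notin A -> p x A = 0) /\
  (forall (A : {set T}) (x : T), A != set0 -> 0 <= p x A <= 1).

Definition positive_scf (p : T -> {set T} -> R) : Prop :=
  forall (A : {set T}) (a : T), a \in A -> 0 < p a A.

Definition IIA_at (p : T -> {set T} -> R) (a b : T) : Prop :=
  forall A : {set T}, a \in A -> b \in A ->
    p a A / p b A = p a [set a; b] / p b [set a; b].

Definition cat_similar (p : T -> {set T} -> R) (a b : T) : Prop := IIA_at p a b.

Definition ISA (p : T -> {set T} -> R) : Prop :=
  forall (A : {set T}) (a b x : T), a \in A -> b \in A -> x \notin A ->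
    ((cat_similar p a x /\ cat_similar p b x) \/
     (~ cat_similar p a x /\ ~ cat_similar p b x)) ->
    p a A / p b A = p a (x |: A) / p b (x |: A).

(* (v,u,P) is an NSC representation of p; the partition X_1..X_K is the set
   of blocks P (mathcomp's [partition]: nonempty, pairwise disjoint blocks
   covering T). v is only relevant on subsets of blocks. *)
Definition NSC_rep (p : T -> {set T} -> R) (P : {set {set T}})
    (u : T -> R) (v : {set T} -> R) : Prop :=
  partition P [set: T] /\
  (forall x, 0 < u x) /\
  (forall (Xi B : {set T}), Xi \in P -> B \subset Xi -> 0 <= v B) /\
  v set0 = 0 /\
  (forall (A : {set T}) (Xi : {set T}) (a : T), A != set0 -> Xi \in P ->
     a \in A :&: Xi ->
     p a A = v (A :&: Xi) / (\sum_(Xj in P) v (A :&: Xj))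
             * (u a / \sum_(b in A :&: Xi) u b)).

Definition is_NSC (p : T -> {set T} -> R) : Prop :=
  exists P u v, NSC_rep p P u v.

Definition degenerate_block (u : T -> R) (v : {set T} -> R) (Xi : {set T})
  : Prop :=
  exists2 a, a \in Xi &
    forall Ai : {set T}, Ai \subset Xi -> a \in Ai ->
      (\sum_(x in Ai) u x) / v Ai = u a / v [set a].

Definition nondegenerate_NSC (p : T -> {set T} -> R) : Prop :=
  exists P u v, NSC_rep p P u v /\
    (forall Xi Xj, Xi \in P -> Xj \in P ->
       degenerate_block u v Xi -> degenerate_block u v Xj -> Xi = Xj).

End Defs.

(* Main.v *)
Require Import Defs.
From mathcomp Require Import all_boot all_order all_algebra.
From mathcomp Require Import reals.
From mathcomp Require Import ring lra.
Import Order.TTheory GRing.Theory Num.Theory.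
Local Open Scope ring_scope.
Set Implicit Arguments. Unset Strict Implicit. Unset Printing Implicit Defensive.
Lemma cocycle_rep (R : realType) (U : Type) (L : eqType) (ok : U -> Prop)
  (lab : U -> L) (g : U -> U -> R) (x0 y0 z0 : U) :
  ok x0 -> ok y0 -> ok z0 ->
  lab x0 != lab y0 -> lab y0 != lab z0 -> lab x0 != lab z0 ->
  (forall x y, ok x -> ok y -> lab x != lab y -> 0 < g x y) ->
  (forall x y, ok x -> ok y -> lab x != lab y -> g x y * g y x = 1) ->
  (forall x y z, ok x -> ok y -> ok z ->
     lab x != lab y -> lab y != lab z -> lab x != lab z -> g x y * g y z = g x z) ->
  exists v : U -> R, (forall x, ok x -> 0 < v x) /\
     forall x y, ok x -> ok y -> lab x != lab y -> g x y * v y = v x.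
Proof.
move=> ox oy oz nxy nyz nxz gpos ganti gcoc.
pose v x := if lab x != lab x0 then g x x0 else g x y0 * g y0 x0.
have case2 : forall x y, ok x -> ok y -> lab x = lab x0 -> lab y != lab x0 ->
    g x y * v y = v x.
  move=> x y hx hy ex ey; rewrite /v ey ex eqxx /=.
  have nxy0 : lab x != lab y0 by rewrite ex.
  have nxy' : lab x != lab y by rewrite ex eq_sym.
  have [eyy|nyy] := eqVneq (lab y) (lab y0).
    have nyz' : lab y != lab z0 by rewrite eyy.
    have nz0 : lab z0 != lab x0 by rewrite eq_sym.
    have nxz' : lab x != lab z0 by rewrite ex.
    rewrite -(gcoc y z0 x0) // -(gcoc y0 z0 x0) // ?(eq_sym (lab y0)) //.
    rewrite mulrA (gcoc x y z0) // mulrA (gcoc x y0 z0) //.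
  rewrite -(gcoc x y y0) // -mulrA (gcoc y y0 x0) // eq_sym //.
exists v; split.
  move=> x hx; rewrite /v; case: ifP => h.
    by apply: gpos.
  move/negbFE/eqP: h => h.
  by apply: mulr_gt0; apply: gpos => //; rewrite ?h // eq_sym.
move=> x y hx hy nxy'.
have [ex|ex] := eqVneq (lab x) (lab x0).
  apply: case2 => //; by rewrite -ex eq_sym.
have [ey|ey] := eqVneq (lab y) (lab x0).
  have := case2 y x hy hx ey ex => <-.
  by rewrite mulrA ganti // mul1r.
by rewrite /v ex ey /= gcoc.
Qed.
From mathcomp Require Import zify.

Section Helpers.
Variables (R : realType) (T : finType).

Lemma chain (x y z : R) : y != 0 -> x / z = (x / y) * (y / z).
Proof. by move=> hy; rewrite mulrA divfK. Qed.

Lemma sum_pos (F : T -> R) (B : {set T}) x :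
  (forall y, y \in B -> 0 < F y) -> x \in B -> 0 < \sum_(y in B) F y.
Proof.
move=> h hx; rewrite (bigD1 x) //=.
have h1 : 0 <= \sum_(i in B | i != x) F i.
  by apply: sumr_ge0 => i /andP [hi _]; apply: ltW; apply: h.
have := h x hx; lra.
Qed.

Lemma add_inv (f : {set T} -> R) (Ds A0 : {set T}) :
  (forall (X : {set T}) x, A0 \subset X -> x \in Ds -> x \notin X -> f (x |: X) = f X) ->
  forall C : {set T}, C \subset Ds -> f (A0 :|: C) = f A0.
Proof.
move=> H C; have [n] := ubnP #|C|; elim: n C => // n IH C hn hC.
have [->|[x hx]] := set_0Vmem C; first by rewrite setU0.
have hC' : C :\ x \subset Ds by apply: subset_trans hC; apply: subsetDl.
have hn' : (#|C :\ x| < n)%N.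
  by move: hn; rewrite (cardsD1 x C) hx; lia.
rewrite -(setD1K hx) setUCA.
have [hin|hnin] := boolP (x \in A0 :|: C :\ x).
  have -> : x |: (A0 :|: C :\ x) = A0 :|: C :\ x by apply/setUidPr; rewrite sub1set.
  exact: IH.
rewrite H //; first exact: IH.
  exact: subsetUl.
exact: (subsetP hC).
Qed.
End Helpers.
Section Base.
Variables (R : realType) (T : finType) (p : T -> {set T} -> R).
Hypotheses (Hs : is_scf p) (Hp : positive_scf p).

Lemma pgt0 a (A : {set T}) : a \in A -> 0 < p a A.
Proof. exact: Hp. Qed.

Lemma pneq0 a (A : {set T}) : a \in A -> p a A != 0.
Proof. by move=> h; rewrite gt_eqF // pgt0. Qed.

Lemma psum1 (A : {set T}) : A != set0 -> \sum_(a in A) p a A = 1.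
Proof. by case: Hs => h _; apply: h. Qed.

Lemma sim_symP a b : cat_similar p a b -> cat_similar p b a.
Proof.
move=> h A hb ha; have := h A ha hb.
have -> : [set b; a] = [set a; b] by rewrite setUC.
have ha2 : a \in [set a; b] by rewrite !inE eqxx.
have hb2 : b \in [set a; b] by rewrite !inE eqxx orbT.
move=> e; rewrite -[LHS]invf_div -[RHS]invf_div; congr (_^-1); exact: e.
Qed.

Lemma divMl (w x y : R) : w != 0 -> (w * x) / (w * y) = x / y.
Proof. by move=> hw; rewrite invfM mulrACA divff // mul1r. Qed.

Lemma cancel_lem (x x' y c d : R) : c != 0 -> d != 0 -> y != 0 ->
  (x * c) / (y * d) = (x' * c) / (y * d) -> x = x'.
Proof.
move=> hc hd hy e.
have simp : forall z, (z * c) / (y * d) * (y * d) / c = z.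
  by move=> z; field; rewrite hc hd hy.
by rewrite -(simp x) e simp.
Qed.

Lemma setU1I_notin (x : T) (A X : {set T}) : x \notin X -> (x |: A) :&: X = A :&: X.
Proof.
move=> hx; apply/setP => y; rewrite !inE.
by case: eqVneq => [->|] //=; rewrite (negbTE hx) !andbF.
Qed.

Section Part.
Variable P : {set {set T}}.
Hypothesis HP : partition P [set: T].

Lemma blkP x : x \in pblock P x.
Proof. by rewrite mem_pblock (cover_partition HP) inE. Qed.

Lemma blk_in x : pblock P x \in P.
Proof. by apply: pblock_mem; rewrite (cover_partition HP) inE. Qed.

Lemma blk_eq B x : B \in P -> x \in B -> pblock P x = B.
Proof. by move=> hB hx; apply: def_pblock => //; exact: partition_trivIset HP. Qed.

Lemma blk_same x y : y \in pblock P x -> pblock P y = pblock P x.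
Proof. by move=> h; apply: blk_eq => //; exact: blk_in. Qed.

Lemma blk_notin x y : pblock P x != pblock P y -> y \notin pblock P x.
Proof. by apply: contra => /blk_same ->. Qed.

Lemma sum_part (F : T -> R) (A : {set T}) :
  \sum_(x in A) F x = \sum_(B in P) \sum_(x in A :&: B) F x.
Proof.
rewrite (eq_bigl (fun x => (x \in [set: T]) && (x \in A))); last first.
  by move=> x; rewrite inE.
rewrite (set_partition_big_cond P HP) /=; apply: eq_bigr => B _.
by apply: eq_bigl => x; rewrite !inE andbC.
Qed.


Section NSC.
Variables (u : T -> R) (v : {set T} -> R).
Hypothesis Hrep : NSC_rep p P u v.

Let S (B : {set T}) := \sum_(b in B) u b.
Let D (A : {set T}) := \sum_(Xj in P) v (A :&: Xj).

Lemma upos x : 0 < u x.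
Proof. by case: Hrep => _ [h _]. Qed.

Lemma Sgt0 a (B : {set T}) : a \in B -> 0 < S B.
Proof.
move=> ha; rewrite /S (bigD1 a) //=.
have h1 : 0 <= \sum_(i in B | i != a) u i.
  by apply: sumr_ge0 => i _; apply: ltW; apply: upos.
have := upos a; lra.
Qed.

Lemma rep' a (A : {set T}) : a \in A ->
  p a A = v (A :&: pblock P a) / D A * (u a / S (A :&: pblock P a)).
Proof.
move=> ha; case: Hrep => _ [_ [_ [_ h]]]; apply: h.
- by apply/set0Pn; exists a.
- exact: blk_in.
- by rewrite inE ha blkP.
Qed.

Lemma vge0 a (B : {set T}) : B \subset pblock P a -> 0 <= v B.
Proof. by case: Hrep => _ [_ [h _]] hB; apply: (h (pblock P a)) => //; apply: blk_in. Qed.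

Lemma vgt0 a (B : {set T}) : a \in B -> B \subset pblock P a -> 0 < v B.
Proof.
move=> ha hB; rewrite lt0r (vge0 hB) andbT.
have := pneq0 ha; rewrite rep' //.
have -> : B :&: pblock P a = B by apply/setIidPl.
by apply: contra => /eqP ->; rewrite !mul0r.
Qed.

Lemma ratio a b (A : {set T}) : a \in A -> b \in A ->
  p a A / p b A =
  (v (A :&: pblock P a) / S (A :&: pblock P a) * u a) /
  (v (A :&: pblock P b) / S (A :&: pblock P b) * u b).
Proof.
move=> ha hb.
have hDa : D A != 0.
  apply: contra (pneq0 ha); rewrite rep' // => /eqP ->.
  by rewrite invr0 mulr0 mul0r.
have ha' : a \in A :&: pblock P a by rewrite inE ha blkP.
have hb' : b \in A :&: pblock P b by rewrite inE hb blkP.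
have sa := Sgt0 ha'; have sb := Sgt0 hb'.
have va := vgt0 ha' (subsetIr _ _); have vb := vgt0 hb' (subsetIr _ _).
have := upos a; have := upos b.
rewrite !rep' //.
move=> ub ua.
field.
by rewrite hDa /= !gt_eqF.
Qed.

Lemma Wgt0 a (A : {set T}) : a \in A ->
  0 < v (A :&: pblock P a) / S (A :&: pblock P a).
Proof.
move=> ha; have ha' : a \in A :&: pblock P a by rewrite inE ha blkP.
by apply: divr_gt0; [apply: (vgt0 ha' (subsetIr _ _)) | apply: Sgt0 ha'].
Qed.

Lemma sim_same a b : pblock P a = pblock P b -> cat_similar p a b.
Proof.
move=> e A ha hb.
have ha2 : a \in [set a; b] by rewrite !inE eqxx.
have hb2 : b \in [set a; b] by rewrite !inE eqxx orbT.
rewrite !ratio // -e !divMl // gt_eqF //; exact: Wgt0.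
Qed.

Lemma inter_comp a b (Ai : {set T}) : pblock P a != pblock P b ->
  Ai \subset pblock P a ->
  ((b |: Ai) :&: pblock P a = Ai) /\ ((b |: Ai) :&: pblock P b = [set b]).
Proof.
move=> n hAi; have hb := blk_notin n.
split; apply/setP => x; rewrite !inE.
  case: eqVneq => [->|_] /=; last by rewrite andb_idr //; exact: (subsetP hAi).
  rewrite (negbTE hb); apply/esym/negbTE; apply: contra hb; exact: (subsetP hAi).
case: eqVneq => [->|_] /=; first by rewrite blkP.
apply/negbTE/negP => /andP [xA xb].
have e1 := blk_same xb; have e2 := blk_same (subsetP hAi x xA).
by move/eqP: n; rewrite -e1 -e2.
Qed.

Lemma deg_of_sim a b : cat_similar p a b -> pblock P a != pblock P b ->
  degenerate_block u v (pblock P a).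
Proof.
move=> h n; exists a; first exact: blkP.
move=> Ai hAi haAi.
have [e1 e2] := inter_comp n hAi.
have hsa : [set a] \subset pblock P a by rewrite sub1set blkP.
have [e3 e4] := inter_comp n hsa.
have ab : [set a; b] = b |: [set a] by rewrite setUC.
have hA : a \in b |: Ai by rewrite inE haAi orbT.
have hB : b \in b |: Ai by rewrite !inE eqxx.
have := h _ hA hB; rewrite !ratio //; last 2 first.
- by rewrite ab !inE eqxx orbT.
- by rewrite ab !inE eqxx.
rewrite ab e1 e2 e3 e4.
move/cancel_lem => e.
have {}e : v Ai / S Ai = v [set a] / S [set a].
  apply: e; rewrite ?gt_eqF ?upos //.
  by apply: divr_gt0; [apply: (vgt0 (set11 b)); rewrite sub1set blkP | apply: Sgt0 (set11 b)].
have S1 : S [set a] = u a by rewrite /S big_set1.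
rewrite -/(S Ai) -[LHS]invf_div e invf_div S1 //.
Qed.

Lemma Wdeg a (A : {set T}) : a \in A ->
  (forall Ai : {set T}, Ai \subset pblock P a -> a \in Ai ->
     (\sum_(x in Ai) u x) / v Ai = u a / v [set a]) ->
  v (A :&: pblock P a) / S (A :&: pblock P a) = v [set a] / u a.
Proof.
move=> ha da.
have := da _ (subsetIr A (pblock P a)); rewrite inE ha blkP => /(_ isT) e.
by apply: invr_inj; rewrite !invf_div /S e.
Qed.

Lemma sim_of_deg Xi Xj : Xi \in P -> Xj \in P ->
  degenerate_block u v Xi -> degenerate_block u v Xj ->
  exists2 a, a \in Xi & exists2 b, b \in Xj & cat_similar p a b.
Proof.
move=> hi hj [a ha da] [b hb db]; exists a => //; exists b => //.
rewrite -(blk_eq hi ha) in da; rewrite -(blk_eq hj hb) in db.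
move=> A haA hbA.
have ha2 : a \in [set a; b] by rewrite !inE eqxx.
have hb2 : b \in [set a; b] by rewrite !inE eqxx orbT.
by rewrite !ratio // !Wdeg.
Qed.

Hypothesis Hnd : forall Xi Xj, Xi \in P -> Xj \in P ->
  degenerate_block u v Xi -> degenerate_block u v Xj -> Xi = Xj.

Lemma sim_blk a b : cat_similar p a b -> pblock P a = pblock P b.
Proof.
move=> h; have [//|n] := eqVneq (pblock P a) (pblock P b).
have d1 := deg_of_sim h n.
have n' : pblock P b != pblock P a by rewrite eq_sym.
have d2 := deg_of_sim (sim_symP h) n'.
by apply: Hnd => //; apply: blk_in.
Qed.

Lemma ISA_of_NSC : ISA p.
Proof.
move=> A a b x ha hb hx [[h1 h2]|[h1 h2]].
  have e : pblock P a = pblock P b by rewrite (sim_blk h1) (sim_blk h2).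
  have hxa : a \in x |: A by rewrite inE ha orbT.
  have hxb : b \in x |: A by rewrite inE hb orbT.
  by rewrite (sim_same e ha hb) (sim_same e hxa hxb).
have n1 : x \notin pblock P a.
  by apply/negP => /blk_same e; apply: h1; apply: sim_same.
have n2 : x \notin pblock P b.
  by apply/negP => /blk_same e; apply: h2; apply: sim_same.
have hxa : a \in x |: A by rewrite inE ha orbT.
have hxb : b \in x |: A by rewrite inE hb orbT.
by rewrite !ratio // !setU1I_notin.
Qed.

End NSC.
End Part.
Section ISAdir.
Hypothesis HISA : ISA p.

Definition simb (a b : T) : bool :=
  [forall A : {set T}, (a \in A) ==> (b \in A) ==>
     (p a A / p b A == p a [set a; b] / p b [set a; b])].

Lemma simbP a b : reflect (cat_similar p a b) (simb a b).
Proof.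
apply: (iffP forallP) => h.
  by move=> A ha hb; move: (h A); rewrite ha hb /= => /eqP.
by move=> A; apply/implyP => ha; apply/implyP => hb; apply/eqP; apply: h.
Qed.

Lemma sim_refl a : cat_similar p a a.
Proof.
move=> A ha _; have ha2 : a \in [set a; a] by rewrite !inE eqxx.
by rewrite !divff // pneq0.
Qed.

Lemma sim_trans a b c : cat_similar p a b -> cat_similar p b c -> cat_similar p a c.
Proof.
move=> h1 h2.
have ha2 : a \in [set a; b] by rewrite !inE eqxx.
have hb2 : b \in [set a; b] by rewrite !inE eqxx orbT.
have hb3 : b \in [set b; c] by rewrite !inE eqxx.
have hc3 : c \in [set b; c] by rewrite !inE eqxx orbT.
pose K := p a [set a; b] / p b [set a; b] * (p b [set b; c] / p c [set b; c]).
have claim1 : forall A : {set T}, a \in A -> b \in A -> c \in A -> p a A / p c A = K.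
  by move=> A ha hb hc; rewrite (@chain _ (p a A) (p b A) (p c A)) ?pneq0 // h1 // h2.
have claim : forall A : {set T}, a \in A -> c \in A -> p a A / p c A = K.
  move=> A ha hc; have [hb|hb] := boolP (b \in A); first exact: claim1.
  have hs : (cat_similar p a b /\ cat_similar p c b) \/
            (~ cat_similar p a b /\ ~ cat_similar p c b).
    by left; split => //; apply: sim_symP.
  rewrite (HISA ha hc hb hs).
  by apply: claim1; rewrite !inE ?ha ?hc ?eqxx ?orbT.
move=> A ha hc; rewrite !claim //; by rewrite !inE eqxx ?orbT.
Qed.

Lemma simb_equiv : {in [set: T] & &, equivalence_rel simb}.
Proof.
move=> x y z _ _ _; split; first by apply/simbP; apply: sim_refl.
move=> /simbP hxy; apply/idP/idP => /simbP h; apply/simbP.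
  exact: sim_trans (sim_symP hxy) h.
exact: sim_trans hxy h.
Qed.

Definition PP := equivalence_partition simb [set: T].
Lemma HPP : partition PP [set: T].
Proof. exact: equivalence_partitionP simb_equiv. Qed.

Lemma mem_blkPP x y : (y \in pblock PP x) = simb x y.
Proof. by rewrite pblock_equivalence_partition // ?inE //; exact: simb_equiv. Qed.

Definition uu x := p x (pblock PP x).

Lemma uu_pos x : 0 < uu x.
Proof. by apply: pgt0; exact: (blkP HPP x). Qed.

Lemma within a b (A : {set T}) : simb a b -> a \in A -> b \in A ->
  p a A / p b A = uu a / uu b.
Proof.
move=> hab ha hb; have hb' : b \in pblock PP a by rewrite mem_blkPP.
rewrite /uu (blk_same HPP hb') (simbP _ _ hab) // (simbP _ _ hab) //.
  exact: (blkP HPP a).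
Qed.


Lemma uu_ne0 x : uu x != 0.
Proof. by rewrite gt_eqF // uu_pos. Qed.

Definition Su (B : {set T}) := \sum_(b in B) uu b.
Definition Q (A X : {set T}) := \sum_(y in A :&: X) p y A.
Definition G (B1 B2 : {set T}) :=
  (\sum_(y in B1) p y (B1 :|: B2)) / (\sum_(y in B2) p y (B1 :|: B2)).

Lemma Su_pos a (B : {set T}) : a \in B -> 0 < Su B.
Proof. by move=> h; apply: (sum_pos _ h) => y _; apply: uu_pos. Qed.

Lemma dform a (A : {set T}) : a \in A ->
  Q A (pblock PP a) = p a A * Su (A :&: pblock PP a) / uu a.
Proof.
move=> ha; rewrite /Q /Su mulr_sumr mulr_suml; apply: eq_bigr => y.
rewrite inE => /andP [hy hya].
have hs : simb a y by rewrite -mem_blkPP.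
have /eqP := within hs ha hy; rewrite eqr_div ?uu_ne0 ?pneq0 // => /eqP e.
have -> : p y A = uu a * p y A / uu a by field; exact: uu_ne0.
by rewrite -e.
Qed.

Lemma Q_pos a (A : {set T}) : a \in A -> 0 < Q A (pblock PP a).
Proof.
move=> ha; apply: (@sum_pos _ _ _ _ a).
  by move=> y; rewrite inE => /andP [hy _]; apply: pgt0.
by rewrite inE ha; exact: (blkP HPP a).
Qed.

Lemma disj_blk a b y : pblock PP a != pblock PP b ->
  y \in pblock PP a -> y \in pblock PP b -> False.
Proof.
move=> n ya yb; move/eqP: n; apply.
by rewrite -(blk_same HPP ya) -(blk_same HPP yb).
Qed.

Lemma nsimb_blk a b : pblock PP a != pblock PP b -> ~~ simb a b.
Proof.
move=> n; apply/negP; rewrite -mem_blkPP => h.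
by move/eqP: n; rewrite (blk_same HPP h).
Qed.

Lemma blk_nsimb a b : ~~ simb a b -> pblock PP a != pblock PP b.
Proof.
move=> n; apply/negP => /eqP e; move/negP: n; apply.
by rewrite -mem_blkPP e; exact: (blkP HPP b).
Qed.

Lemma frac_scale (x y x' y' c d : R) : y != 0 -> y' != 0 -> d != 0 ->
  x / y = x' / y' -> (x * c) / (y * d) = (x' * c) / (y' * d).
Proof.
move=> hy hy' hd e.
have h : forall s t, t != 0 -> (s * c) / (t * d) = (s / t) * (c / d).
  by move=> s t ht; field; rewrite ht hd.
by rewrite !h // e.
Qed.

Lemma frac_scale2 (x y x' y' c e d f : R) : y != 0 -> y' != 0 -> d != 0 ->
  e != 0 -> f != 0 ->
  x / y = x' / y' -> (x * c / e) / (y * d / f) = (x' * c / e) / (y' * d / f).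
Proof.
move=> hy hy' hd he hf ex.
have h : forall s t, t != 0 -> (s * c / e) / (t * d / f) = (s / t) * ((c / e) / (d / f)).
  by move=> s t ht; field; rewrite ht hd he hf.
by rewrite !h // ex.
Qed.

Lemma removal a b (A : {set T}) : a \in A -> b \in A -> ~~ simb a b ->
  p a A / p b A =
  p a ((A :&: pblock PP a) :|: (A :&: pblock PP b)) /
  p b ((A :&: pblock PP a) :|: (A :&: pblock PP b)).
Proof.
move=> ha hb nab.
set A' := (A :&: pblock PP a) :|: (A :&: pblock PP b).
set Ds := ~: (pblock PP a :|: pblock PP b).
have haA : a \in A' by rewrite !inE ha; rewrite (blkP HPP a).
have hbA : b \in A' by rewrite !inE hb; rewrite (blkP HPP b) orbT.
have eA : A' :|: (A :&: Ds) = A.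
  apply/setP => y; rewrite !inE.
  by case: (y \in A); case: (y \in pblock PP a); case: (y \in pblock PP b).
have := @add_inv R T (fun X => p a X / p b X) Ds A' _ (A :&: Ds) (subsetIr _ _).
rewrite eA => -> //.
move=> X x hX hx hxX; symmetry.
have haX := subsetP hX a haA; have hbX := subsetP hX b hbA.
apply: HISA => //; right.
move: hx; rewrite !inE negb_or => /andP [h1 h2].
by split => /simbP; rewrite -mem_blkPP; apply/negP.
Qed.

Lemma L1 a b (A : {set T}) : a \in A -> b \in A -> ~~ simb a b ->
  Q A (pblock PP a) / Q A (pblock PP b) =
  G (A :&: pblock PP a) (A :&: pblock PP b).
Proof.
move=> ha hb nab.
have n := blk_nsimb nab.
set A' := (A :&: pblock PP a) :|: (A :&: pblock PP b).
have haA : a \in A' by rewrite !inE ha; rewrite (blkP HPP a).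
have hbA : b \in A' by rewrite !inE hb; rewrite (blkP HPP b) orbT.
have e1 : A' :&: pblock PP a = A :&: pblock PP a.
  apply/setP => y; rewrite !inE.
  have [ya|] := boolP (y \in pblock PP a); rewrite ?andbF //=.
  have [yb|] := boolP (y \in pblock PP b); last by rewrite !andbF orbF andbT.
  by case: (disj_blk n ya yb).
have e2 : A' :&: pblock PP b = A :&: pblock PP b.
  apply/setP => y; rewrite !inE.
  have [yb|] := boolP (y \in pblock PP b); rewrite ?andbF //=.
  have [ya|] := boolP (y \in pblock PP a); last by rewrite !andbF andbT.
  by case: (disj_blk n ya yb).
have -> : G (A :&: pblock PP a) (A :&: pblock PP b) =
          Q A' (pblock PP a) / Q A' (pblock PP b) by rewrite /Q e1 e2.
rewrite !dform // e1 e2.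
apply: frac_scale2; rewrite ?pneq0 ?uu_ne0 //.
  by rewrite gt_eqF // (@Su_pos b) // inE hb (blkP HPP b).
- exact: (blkP HPP a).
- exact: (blkP HPP b).
- exact: removal.
Qed.


Definition okB (B : {set T}) : Prop := exists2 x, x \in B & B \subset pblock PP x.
Definition lab (d : T) (B : {set T}) := pblock PP (odflt d [pick x in B]).

Lemma ok_blk B x : okB B -> x \in B -> B \subset pblock PP x.
Proof.
move=> [w hw hB] hx; have hxw := subsetP hB x hx.
by rewrite (blk_same HPP hxw).
Qed.

Lemma lab_eq d B x : okB B -> x \in B -> lab d B = pblock PP x.
Proof.
move=> hok hx; rewrite /lab; case: pickP => [y hy|none] /=; last first.
  by have := none x; rewrite hx.
exact: (blk_same HPP (subsetP (ok_blk hok hx) y hy)).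
Qed.

Lemma okI a (A : {set T}) : a \in A -> okB (A :&: pblock PP a).
Proof. by move=> ha; exists a; [rewrite inE ha (blkP HPP a) | exact: subsetIr]. Qed.

Lemma ok1 a : okB [set a].
Proof. by exists a; [rewrite set11 | rewrite sub1set (blkP HPP a)]. Qed.

Lemma sumpB (B A : {set T}) x : x \in B -> B \subset A -> 0 < \sum_(y in B) p y A.
Proof. by move=> hx hB; apply: (sum_pos _ hx) => y hy; apply: pgt0; apply: (subsetP hB). Qed.

Lemma Gpos B1 B2 : okB B1 -> okB B2 -> 0 < G B1 B2.
Proof.
move=> [x1 h1 _] [x2 h2 _]; apply: divr_gt0.
  by apply: (sumpB h1); apply: subsetUl.
by apply: (sumpB h2); apply: subsetUr.
Qed.

Lemma Ganti B1 B2 : okB B1 -> okB B2 -> G B1 B2 * G B2 B1 = 1.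
Proof.
move=> [x1 h1 _] [x2 h2 _]; rewrite /G [B2 :|: B1]setUC.
have s1 : 0 < \sum_(y in B1) p y (B1 :|: B2) by apply: (sumpB h1); apply: subsetUl.
have s2 : 0 < \sum_(y in B2) p y (B1 :|: B2) by apply: (sumpB h2); apply: subsetUr.
by field; rewrite !gt_eqF.
Qed.

Lemma interU (B C : {set T}) x : B \subset pblock PP x ->
  (forall y, y \in C -> y \notin pblock PP x) -> (B :|: C) :&: pblock PP x = B.
Proof.
move=> hB hC; apply/setP => y; rewrite !inE.
case hyB: (y \in B) => /=; first by rewrite (subsetP hB y hyB).
by case hyC: (y \in C) => //=; rewrite (negbTE (hC y hyC)).
Qed.

Lemma outB x1 x2 (B2 : {set T}) y : pblock PP x1 != pblock PP x2 ->
  B2 \subset pblock PP x2 -> y \in B2 -> y \notin pblock PP x1.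
Proof. by move=> n s hy; apply/negP => y1; exact: disj_blk n y1 (subsetP s y hy). Qed.

Lemma Gcoc d B1 B2 B3 : okB B1 -> okB B2 -> okB B3 ->
  lab d B1 != lab d B2 -> lab d B2 != lab d B3 -> lab d B1 != lab d B3 ->
  G B1 B2 * G B2 B3 = G B1 B3.
Proof.
move=> o1 o2 o3; case: (o1) => x1 h1 s1; case: (o2) => x2 h2 s2; case: (o3) => x3 h3 s3.
rewrite (lab_eq d o1 h1) (lab_eq d o2 h2) (lab_eq d o3 h3) => n12 n23 n13.
have n21 : pblock PP x2 != pblock PP x1 by rewrite eq_sym.
have n32 : pblock PP x3 != pblock PP x2 by rewrite eq_sym.
have n31 : pblock PP x3 != pblock PP x1 by rewrite eq_sym.
set A := B1 :|: (B2 :|: B3).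
have e1 : A :&: pblock PP x1 = B1.
  apply: interU => // y; rewrite inE => /orP [] hy; [exact: outB n12 s2 hy | exact: outB n13 s3 hy].
have e2 : A :&: pblock PP x2 = B2.
  rewrite /A setUCA; apply: interU => // y; rewrite inE => /orP [] hy;
    [exact: outB n21 s1 hy | exact: outB n23 s3 hy].
have e3 : A :&: pblock PP x3 = B3.
  rewrite /A [B2 :|: B3]setUC setUCA; apply: interU => // y; rewrite inE => /orP [] hy;
    [exact: outB n31 s1 hy | exact: outB n32 s2 hy].
have a1 : x1 \in A by rewrite !inE h1.
have a2 : x2 \in A by rewrite !inE h2 orbT.
have a3 : x3 \in A by rewrite !inE h3 !orbT.
rewrite -e1 -e2 -e3 -!L1 // ?nsimb_blk //.
by rewrite -chain // gt_eqF // Q_pos.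
Qed.

Lemma ISA_NSC a0 b0 c0 : ~ cat_similar p a0 b0 -> ~ cat_similar p b0 c0 ->
  ~ cat_similar p a0 c0 -> nondegenerate_NSC p.
Proof.
move=> nab nbc nac.
have l1 : forall x, lab a0 [set x] = pblock PP x by move=> x; apply: lab_eq (ok1 x) (set11 x).
have nb : forall x y, ~ cat_similar p x y -> pblock PP x != pblock PP y.
  by move=> x y h; apply: blk_nsimb; apply/negP => /simbP.
have [v0 [v0pos v0eq]] := @cocycle_rep R {set T} _ okB (lab a0) G
   [set a0] [set b0] [set c0] (ok1 a0) (ok1 b0) (ok1 c0)
   ltac:(by rewrite !l1; apply: nb) ltac:(by rewrite !l1; apply: nb)
   ltac:(by rewrite !l1; apply: nb)
   (fun x y ox oy _ => Gpos ox oy) (fun x y ox oy _ => Ganti ox oy)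
   (fun x y z ox oy oz nxy nyz nxz => Gcoc ox oy oz nxy nyz nxz).
pose v (B : {set T}) := if B == set0 then 0 else v0 B.
have vok : forall B, okB B -> v B = v0 B.
  move=> B [x hx _]; rewrite /v ifF //; apply/negbTE/set0Pn; by exists x.
have Hrep : NSC_rep p PP uu v.
  split; first exact: HPP.
  split; first exact: uu_pos.
  split.
    move=> Xi B hXi hB; rewrite /v; case: ifP => // /set0Pn [x hx].
    apply: ltW; apply: v0pos; exists x => //.
    by rewrite (blk_eq HPP hXi (subsetP hB x hx)).
  split; first by rewrite /v eqxx.
  move=> A Xi a hA hXi; rewrite inE => /andP [ha hai].
  rewrite -(blk_eq HPP hXi hai).
  have cross : forall Xj, Xj \in PP ->
      Q A (pblock PP a) * v (A :&: Xj) = Q A Xj * v (A :&: pblock PP a).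
    move=> Xj hXj; have [e0|[b hb]] := set_0Vmem (A :&: Xj).
      by rewrite /Q e0 /v eqxx big_set0 mulr0 mul0r.
    move: hb; rewrite inE => /andP [hbA hbj]; rewrite -(blk_eq HPP hXj hbj).
    have [e|n] := eqVneq (pblock PP a) (pblock PP b); first by rewrite e mulrC.
    have L := L1 ha hbA (nsimb_blk n).
    have := v0eq _ _ (okI ha) (okI hbA).
    rewrite (lab_eq a0 (okI ha) (_ : a \in _)) ?inE ?ha ?(blkP HPP a) //.
    rewrite (lab_eq a0 (okI hbA) (_ : b \in _)) ?inE ?hbA ?(blkP HPP b) //.
    have oa := okI ha; have ob := okI hbA.
    move=> /(_ n); rewrite -L !vok // => <-.
    have := Q_pos hbA; move: (Q A _) (Q A _) => qa qb hqb.
    by field; rewrite gt_eqF.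
  have sumQ : \sum_(Xj in PP) Q A Xj = 1.
    by rewrite /Q -(sum_part HPP (fun y => p y A) A) psum1.
  have key : Q A (pblock PP a) * \sum_(Xj in PP) v (A :&: Xj) = v (A :&: pblock PP a).
    rewrite mulr_sumr (eq_bigr _ cross) -mulr_suml sumQ mul1r //.
  have vpos : 0 < v (A :&: pblock PP a).
    by have o := okI ha; rewrite vok // v0pos.
  have hS : \sum_(Xj in PP) v (A :&: Xj) != 0.
    by apply/eqP => h0; move: key; rewrite h0 mulr0 => h1; rewrite -h1 ltxx in vpos.
  have eQ : Q A (pblock PP a) = v (A :&: pblock PP a) / \sum_(Xj in PP) v (A :&: Xj).
    by rewrite -key mulfK.
  rewrite -eQ (dform ha) /Su.
  have hsu : 0 < \sum_(b in A :&: pblock PP a) uu b.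
    by apply: (@Su_pos a); rewrite inE ha (blkP HPP a).
  have hu := uu_ne0 a.
  by field; rewrite hu gt_eqF.
exists PP, uu, v; split => //.
move=> Xi Xj hi hj di dj.
have [a ha [b hb hab]] := sim_of_deg HPP Hrep hi hj di dj.
have hb' : b \in pblock PP a by rewrite mem_blkPP; apply/simbP.
by rewrite -(blk_eq HPP hi ha) -(blk_eq HPP hj hb) (blk_same HPP hb').
Qed.

End ISAdir.
End Base.

Theorem theorem1 (R : realType) (T : finType) (p : T -> {set T} -> R) :
  is_scf p -> positive_scf p ->
  (exists a b c : T, ~ cat_similar p a b /\ ~ cat_similar p b c /\
                     ~ cat_similar p a c) ->
  (ISA p <-> nondegenerate_NSC p).
Proof.
move=> Hs Hp [a [b [c [h1 [h2 h3]]]]]; split.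
  by move=> HISA; apply: (ISA_NSC Hs Hp HISA h1 h2 h3).
move=> [P [u [v [Hrep Hnd]]]].
by apply: (ISA_of_NSC Hp (proj1 Hrep) Hrep Hnd).
Qed.
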